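(* For any graph $G$ and integers $k\ge 2$, $r\ge 3$, let $\mathcal{G}=\bigcup_{v\in V(G)}\mathcal{G}^*(v)$. Then $R_r(\mathcal{B}(G),k)\le R(\mathcal{G},k)+r-2$.
   Context: For a graph $G$, a hypergraph $H$ is a Berge-$G$ hypergraph if there are an injective map $\phi:V(G)\to V(H)$ and pairwise distinct hyperedges $e_{xy}\in E(H)$, one for each $xy\in E(G)$, with $\phi(x),\phi(y)\in e_{xy}$. $\mathcal{B}(G)$ denotes the family of all Berge-$G$ hypergraphs. For a family $\mathcal{H}$ of $r$-uniform hypergraphs, $R_r(\mathcal{H},k)$ is the smallest $n$ such that every $k$-coloring of the hyperedges of the complete $r$-uniform hypergraph $K_n^r$ contains a monochromatic subhypergraph belonging to $\mathcal{H}$. For a family $\mathcal{G}$ of graphs, $R(\mathcal{G},k)$ is the smallest $n$ such that every $k$-coloring of the edges of $K_n$ contains a monochromatic subgraph isomorphic to some member of $\mathcal{G}$. For a graph $G$ and $v\in V(G)$ with neighborhood $N(v)=\{q_1,\dots,q_t\}$, let $G'=G-v$. An extension of $G-v$ is any graph obtained from $G'$ by adding, for each $i=1,\dots,t$, an edge $q_ir_i$ not belonging to $G'$, where each $r_i$ is either a vertex of $G'$ or a new vertex not in $G'$ (new vertices may be shared by several $r_i$), and the $t$ added edges are pairwise distinct. $\mathcal{G}^*(v)$ denotes the family of all such extensions. *)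

(* Defs.v *)
From mathcomp Require Import all_boot.
Set Implicit Arguments. Unset Strict Implicit. Unset Printing Implicit Defensive.

(* A (finite simple) graph G is given by a vertex finType V (all of V are
   vertices) and an edge set E : {set {set V}} of 2-element subsets. *)
Definition simple_edges (V : finType) (E : {set {set V}}) : Prop :=
  forall e, e \in E -> #|e| = 2.

Definition nbhd (V : finType) (E : {set {set V}}) (v : V) : {set V} :=
  [set q | [set v; q] \in E].

(* Extensions of G - v.  Their vertex type is V + 'I_#|V|: the left summand
   holds the vertices of G' = G - v, the right summand holds the possible new
   vertices (at most t < #|V| new vertices are ever needed).  The choice of
   the r_i is a map rho : V -> V + 'I_#|V| (only its values on N(v) matter). *)
Definition ext_type (V : finType) : finType := (V + 'I_#|V|)%type.

Definition del_edges (V : finType) (E : {set {set V}}) (v : V)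
  : {set {set ext_type V}} :=
  (fun e : {set V} => (@inl V 'I_#|V|) @: e) @: [set e in E | v \notin e].

Definition ext_edge (V : finType) (rho : V -> ext_type V) (q : V)
  : {set ext_type V} := [set (inl q : ext_type V); rho q].

Definition is_extension (V : finType) (E : {set {set V}}) (v : V)
  (rho : V -> ext_type V) : Prop :=
  (forall q, q \in nbhd E v ->
     [/\ rho q != inl q,                      (* q_i r_i is an edge *)
         rho q != inl v &                     (* r_i in V(G') or new *)
         ext_edge rho q \notin del_edges E v])
  /\ {in nbhd E v &, injective (ext_edge rho)}.

Definition ext_vertices (V : finType) (E : {set {set V}}) (v : V)
  (rho : V -> ext_type V) : {set ext_type V} :=
  (@inl V 'I_#|V|) @: [set x | x != v] :|: rho @: nbhd E v.

Definition ext_edges (V : finType) (E : {set {set V}}) (v : V)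
  (rho : V -> ext_type V) : {set {set ext_type V}} :=
  del_edges E v :|: ext_edge rho @: nbhd E v.

(* A k-colouring of the edges of K_N (resp. hyperedges of K_N^r) is a map
   c : {set 'I_N} -> 'I_k; only its values on 2-sets (resp. r-sets) matter. *)

Definition mono_copy (N k : nat) (c : {set 'I_N} -> 'I_k) (i : 'I_k)
  (T : finType) (W : {set T}) (F : {set {set T}}) : Prop :=
  exists f : T -> 'I_N, {in W &, injective f} /\
    forall e, e \in F -> c (f @: e) = i.

Definition ext_ramsey_prop (V : finType) (E : {set {set V}}) (k N : nat)
  : Prop :=
  forall c : {set 'I_N} -> 'I_k,
    exists (i : 'I_k) (v : V) (rho : V -> ext_type V),
      is_extension E v rho /\
      mono_copy c i (ext_vertices E v rho) (ext_edges E v rho).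

Definition mono_berge (V : finType) (E : {set {set V}}) (r N k : nat)
  (c : {set 'I_N} -> 'I_k) (i : 'I_k) : Prop :=
  exists (phi : V -> 'I_N) (h : {set V} -> {set 'I_N}),
    injective phi /\ {in E &, injective h} /\
    forall e, e \in E ->
      [/\ #|h e| = r, c (h e) = i & phi @: e \subset h e].

Definition berge_ramsey_prop (V : finType) (E : {set {set V}}) (r k N : nat)
  : Prop :=
  forall c : {set 'I_N} -> 'I_k, exists i : 'I_k, mono_berge E r c i.

(* Main.v *)
Require Import Defs.
From mathcomp Require Import all_boot.
From mathcomp Require Import zify.

Lemma imset_inj_on (T U : finType) (f : T -> U) (W A B : {set T}) :
  {in W &, injective f} -> A \subset W -> B \subset W ->
  f @: A = f @: B -> A = B.
Proof.
move=> finj sAW sBW eqAB; apply/setP => x.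
wlog suff: A B sAW sBW eqAB / x \in A -> x \in B.
  by move=> H; apply/idP/idP; [apply: H|apply: H].
move=> xA; have : f x \in f @: B by rewrite -eqAB imset_f.
case/imsetP => y yB /finj; rewrite (subsetP sAW) // (subsetP sBW) // => /(_ isT isT).
by move->.
Qed.

Theorem corollary2 (V : finType) (E : {set {set V}}) (k r N : nat) :
  simple_edges E -> 2 <= k -> 3 <= r ->
  ext_ramsey_prop E k N ->
  (forall n, n < N -> ~ ext_ramsey_prop E k n) ->
  exists n, n <= N + r - 2 /\ berge_ramsey_prop E r k n.
Proof.
move=> sE k2 r3 HR _.
pose m := r - 2.
have m0 : 0 < m by rewrite /m; lia.
exists (N + m); split; first by rewrite /m; lia.
move=> C.
pose S : {set 'I_(N+m)} := [set rshift N j | j : 'I_m].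
pose c : {set 'I_N} -> 'I_k := fun A => C (lshift m @: A :|: S).
have [i [v [rho [[Hext Hinj] [f [finj fcol]]]]]] := HR c.
exists i.
pose s0 : 'I_(N+m) := rshift N (Ordinal m0).
pose phi := fun x : V => if x == v then s0 else lshift m (f (inl x)).
pose q_of := fun e : {set V} => odflt v [pick q in e :\ v].
pose g := fun e : {set V} =>
  if v \in e then ext_edge rho (q_of e) else (@inl V 'I_#|V|) @: e.
pose h := fun e => lshift m @: (f @: g e) :|: S.
exists phi, h.
set W := ext_vertices E v rho.
have notS : forall a, lshift m a \notin S.
  by move=> a; apply/imsetP => -[j _ /eqP]; rewrite eq_lrshift.
have memh : forall e a, (lshift m a \in h e) = (a \in f @: g e).
  by move=> e a; rewrite /h in_setU (negbTE (notS a)) orbF mem_imset //; exact: lshift_inj.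
have Hq : forall e, e \in E -> v \in e ->
    [/\ q_of e != v, q_of e \in nbhd E v & e = [set v; q_of e]].
  move=> e eE ve.
  have c1 : #|e :\ v| = 1 by have := cardsD1 v e; rewrite ve sE //; case.
  rewrite /q_of; case: pickP => [q /= qe|/eq_card0]; last by rewrite c1.
  have eq2 : e = [set v; q].
    apply/eqP; rewrite eq_sym eqEcard cards2 sE //.
    move: qe; rewrite in_setD1 => /andP [qv qe].
    by rewrite subUset !sub1set ve qe /= eq_sym qv.
  move: qe; rewrite in_setD1 => /andP [qv _]; split => //.
  by rewrite /nbhd inE -eq2.
have Hg : forall e, e \in E ->
    [/\ g e \in ext_edges E v rho, g e \subset W & #|g e| = 2].
  move=> e eE; rewrite /g; case: ifP => ve.
    have [qv qN eq2] := Hq e eE ve.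
    have [rq _ _] := Hext _ qN.
    split.
    - by rewrite /ext_edges inE imset_f // orbT.
    - rewrite subUset !sub1set /W /ext_vertices !inE imset_f ?inE //.
      by rewrite (imset_f rho qN) orbT.
    - by rewrite cards2 eq_sym rq.
  split.
  - by rewrite /ext_edges inE /del_edges imset_f // inE eE ve.
  - apply/subsetP => x /imsetP [y ye ->]; rewrite /W /ext_vertices inE imset_f //.
    by rewrite inE; apply: contraFneq ve => <-.
  - by rewrite card_imset ?sE //; move=> ? ? [].
split.
  move=> x y; rewrite /phi; case: eqP => xv; case: eqP => yv.
  - by rewrite xv yv.
  - by move/eqP; rewrite eq_sym eq_lrshift.
  - by move/eqP; rewrite eq_lrshift.
  move/lshift_inj/finj; rewrite /W /ext_vertices !inE !imset_f ?inE;
    try (by apply/eqP); by move=> /(_ isT isT) [].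
split.
  move=> e1 e2 e1E e2E eqh.
  have [g1 W1 _] := Hg _ e1E; have [g2 W2 _] := Hg _ e2E.
  have : f @: g e1 = f @: g e2 by apply/setP => a; rewrite -!memh eqh.
  move/(@imset_inj_on _ _ f _ _ _ finj W1 W2); rewrite /g.
  case: ifP => v1; case: ifP => v2.
  - have [_ q1 d1] := Hq _ e1E v1; have [_ q2 d2] := Hq _ e2E v2.
    by move/(Hinj _ _ q1 q2) => eqq; rewrite d1 d2 eqq.
  - move=> H; have [_ q1 _] := Hq _ e1E v1; have [_ _ nd] := Hext _ q1.
    by rewrite H /del_edges imset_f // inE e2E v2 in nd.
  - move=> H; have [_ q2 _] := Hq _ e2E v2; have [_ _ nd] := Hext _ q2.
    by rewrite -H /del_edges imset_f // inE e1E v1 in nd.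
  - by move/imset_inj; apply; move=> ? ? [].
move=> e eE; have [gE gW g2] := Hg _ eE.
split.
- rewrite /h cardsU.
  have -> : lshift m @: (f @: g e) :&: S = set0.
    apply/setP => a; rewrite !inE; apply/negP => /andP [/imsetP [b _ ->]].
    by rewrite (negbTE (notS b)).
  rewrite cards0 subn0 card_imset; last exact: lshift_inj.
  rewrite card_in_imset; last exact: (sub_in2 (subsetP gW) finj).
  rewrite g2 card_imset; last exact: rshift_inj.
  by rewrite card_ord /m; lia.
- by rewrite -(fcol _ gE).
- apply/subsetP => _ /imsetP [x xe ->]; rewrite /phi.
  case: eqP => xv.
    by rewrite /h in_setU /S imset_f ?orbT.
  rewrite memh /g; case: ifP => ve; apply: imset_f.
    have [_ _ eq2] := Hq _ eE ve.
    move: xe; rewrite {1}eq2 !inE (negbTE (introN eqP xv)) /= => /eqP ->.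
    by rewrite eqxx.
  exact: imset_f.
Qed.
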